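(* Let $\alpha>0$, $\gamma\in(0,1)$ and suppose $2k\le\gamma n$. Suppose the data $x_1,\dots,x_n$ have histogram $\theta=(\theta_1,\dots,\theta_r,0,\dots,0)\in\Theta$ for some $1\le r<k$ (all coordinates after the $r$-th equal zero). Let $z=(z_1,\dots,z_k)$ be given by $z_j=\theta_j$ if $\theta_j=0$, and $z_j=\theta_j+\frac{2}{n\alpha}L_j$ otherwise, where $L_1,\dots,L_k$ are i.i.d. Laplace random variables with mean zero and rate one, and let $\delta(z)\in\arg\min_{\theta'\in\Theta}\|z-\theta'\|_1$. Then $\|\theta-\delta(z)\|_1=O_P\!\left(\frac{r}{\alpha n}\right)$; that is, for every $\varepsilon>0$ there is $M<\infty$ depending only on $\varepsilon$ such that $\mathbb P\big(\|\theta-\delta(z)\|_1> M\,\frac{r}{\alpha n}\big)\le\varepsilon$.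
   Context: The sample space is partitioned into $k$ cells $B_1,\dots,B_k$; the histogram of $x_1,\dots,x_n$ is $\theta_j=\frac1n\sum_{i=1}^n\mathbf 1\{x_i\in B_j\}$, and $\Theta=\{(a_1/n,\dots,a_k/n):a_j\in\mathbb Z_{\ge0},\ \sum_ja_j=n\}$ is the set of all such histograms. $\|v\|_1=\sum_j|v_j|$. The Laplace distribution with mean zero and rate one has density $\frac12e^{-|x|}$. The probability is over the Laplace noise. *)

(* Defs.v *)
From HB Require Import structures.
From mathcomp Require Import all_boot all_order all_algebra.
From mathcomp Require Import all_classical all_reals all_analysis.
Set Implicit Arguments. Unset Strict Implicit. Unset Printing Implicit Defensive.
Import Order.TTheory GRing.Theory Num.Theory.
Local Open Scope classical_set_scope.
Local Open Scope ring_scope.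

Definition norm1 (R : realType) (k : nat) (v : 'I_k -> R) : R :=
  \sum_(j < k) `|v j|.

Definition is_hist (R : realType) (n k : nat) (theta : 'I_k -> R) : Prop :=
  exists a : 'I_k -> nat, (\sum_(j < k) a j)%N = n /\
    forall j, theta j = (a j)%:R / n%:R.

Definition laplace_rv d (T : measurableType d) (R : realType)
    (P : probability T R) (X : T -> R) : Prop :=
  measurable_fun setT X /\
  forall A : set R, measurable A ->
    P (X @^-1` A) =
    (\int[@lebesgue_measure R]_(x in A) ((2^-1 * expR (- `|x|)) : R)%:E)%E.

Definition mutually_independent d (T : measurableType d) (R : realType)
    (P : probability T R) (k : nat) (X : 'I_k -> T -> R) : Prop :=
  forall A : 'I_k -> set R, (forall j, measurable (A j)) ->
    P (\bigcap_(j in [set: 'I_k]) (X j @^-1` A j)) =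
    (\prod_(j < k) P (X j @^-1` A j))%E.

(* Main.v *)
Require Import Defs.
From HB Require Import structures.
From mathcomp Require Import all_boot all_order all_algebra.
From mathcomp Require Import all_classical all_reals all_analysis.
From mathcomp Require Import ring lra measurable_realfun.
Import Order.TTheory GRing.Theory Num.Theory numFieldNormedType.Exports.
Local Open Scope classical_set_scope.
Local Open Scope ring_scope.
Lemma ind_ge0 (T : Type) (R : realType) (A : set T) w : 0 <= (\1_A w : R).
Proof. by rewrite indicE; case: (w \in A). Qed.

Lemma count_markov d (T : measurableType d) (R : realType) (P : probability T R)
  (I : Type) (s : seq I) (A : I -> set T) (c : R) :
  (forall i, measurable (A i)) -> 0 < c ->
  (c%:E * P [set w | (c < \sum_(i <- s) (\1_(A i) w : R))%R] <= \sum_(i <- s) P (A i))%E.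
Proof.
move=> mA c0.
set f := fun w => \sum_(i <- s) (\1_(A i) w : R).
have mf : measurable_fun setT f by apply: measurable_sum => i; exact: measurable_indic.
have mS : measurable [set w | (c < f w)%R].
  have := mf measurableT _ (measurable_itv `]c, +oo[).
  rewrite setTI; congr measurable.
  by apply/seteqP; split => w /=; rewrite in_itv/= andbT.
have f0 : forall w, 0 <= f w by move=> w; apply: sumr_ge0 => i _; exact: ind_ge0.
have H1 : (c%:E * P [set w | (c < f w)%R] <= \int[P]_(x in [set w | (c < f w)%R]) (f x)%:E)%E.
  rewrite -integral_cst//; apply: ge0_le_integral => //.
  - by move=> x _; rewrite lee_fin ltW.
  - by apply/measurable_EFinP; exact: measurable_funS mf.
  - by move=> x /= /ltW; rewrite lee_fin.
have H2 : (\int[P]_(x in [set w | (c < f w)%R]) (f x)%:E <= \int[P]_(x in setT) (f x)%:E)%E.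
  apply: ge0_subset_integral => //; first exact/measurable_EFinP.
  by move=> x _; rewrite lee_fin.
have H3 : (\int[P]_(x in setT) (f x)%:E <= \sum_(i <- s) P (A i))%E.
  rewrite /f; under eq_integral do rewrite -sumEFin.
  rewrite ge0_integral_sum//=.
  - by apply: lee_sum => i _; rewrite integral_indic// setIT.
  - by move=> i; apply/measurable_EFinP; exact: measurable_indic.
exact: (le_trans H1 (le_trans H2 H3)).
Qed.
Lemma dF1 (R : realType) (x : R) :
  is_derive x (1:R) (fun y : R => - 2^-1 * expR (- y)) (2^-1 * expR (- x)).
Proof.
have h : is_derive x (1:R) (expR \o -%R) (expR (- x) * -1).
  apply: is_derive1_comp.
have h2 := is_deriveZ (- 2^-1) h.
have -> : (fun y : R => - 2^-1 * expR (- y)) = (- 2^-1) \*: (expR \o -%R).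
  by apply/funext => y.
by apply: is_derive_eq h2 _; rewrite /GRing.scale/=; lra.
Qed.

Lemma dF2 (R : realType) (x : R) :
  is_derive x (1:R) (fun y : R => 2^-1 * expR y) (2^-1 * expR x).
Proof.
have h2 := is_deriveZ (2^-1) (is_derive_expR x).
have -> : (fun y : R => 2^-1 * expR y) = (2^-1) \*: expR by apply/funext => y.
exact: h2.
Qed.

Lemma der_cont (R : realType) (F df : R -> R) :
  (forall x, is_derive x (1:R) F (df x)) -> continuous (F : R -> R).
Proof.
move=> dF x; apply: differentiable_continuous; apply/derivable1_diffP.
by have [] := dF x.
Qed.

Lemma ftc_all (R : realType) (f F : R -> R) (a b : R) : a < b ->
  continuous (f : R -> R) -> (forall x, is_derive x (1:R) F (f x)) ->
  (\int[@lebesgue_measure R]_(x in `[a, b]) (f x)%:E = (F b)%:E - (F a)%:E)%E.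
Proof.
move=> ab cf dF.
have cF := @der_cont R F f dF.
apply: continuous_FTC2 => //.
- exact: continuous_subspaceT.
- split.
  + by move=> x _; by have [] := dF x.
  + exact/cvg_at_right_filter/cF.
  + exact/cvg_at_left_filter/cF.
- by move=> x _; rewrite derive1E derive_val.
Qed.

Lemma cont_f1 (R : realType) : continuous (fun x : R => 2^-1 * expR (- x)).
Proof.
have := @der_cont R (fun y : R => - 2^-1 * expR (- y)) _ (@dF1 R).
move=> c x.
have -> : (fun x : R => 2^-1 * expR (- x)) = - (fun y : R => - 2^-1 * expR (- y)).
  by apply/funext => y /=; rewrite /GRing.opp/= mulNr opprK.
exact: continuousN (c x).
Qed.

Lemma cont_f2 (R : realType) : continuous (fun x : R => 2^-1 * expR x).
Proof. exact: (@der_cont R _ _ (@dF2 R)). Qed.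

Lemma meas_g (R : realType) (D : set R) :
  measurable_fun D (fun x : R => 2^-1 * expR (- `|x|)).
Proof.
apply: measurable_funM => //.
apply: measurableT_comp => //.
apply: measurableT_comp => //.
Qed.

Lemma lap_int (R : realType) (t : R) : 0 < t ->
  (\int[@lebesgue_measure R]_(x in `[(- t)%R, t]) ((2^-1 * expR (- `|x|)) : R)%:E
   = (1 - expR (- t))%R%:E)%E.
Proof.
move=> t0.
have -> : [set` `[-t, t]] = [set` `[-t, 0]] `|` [set` `]0, t]] :> set R.
  apply/seteqP; split => x /=; rewrite !in_itv/=.
    move=> /andP[h1 h2]; have [x0|x0] := leP x 0; [left|right];
      apply/andP; split; lra.
  case=> /andP[h1 h2]; apply/andP; split; lra.
rewrite ge0_integral_setU//=; last 2 first.
- apply: measurable_funTS; apply/measurable_EFinP. exact: meas_g.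
- apply/disj_setPS => x [/=]; rewrite !in_itv/= => /andP[_ h1] /andP[h2 _].
  by lra.
rewrite integral_itv_obnd_cbnd; last by apply/measurable_EFinP; exact: meas_g.
have -> : (\int[lebesgue_measure]_(x in `[(- t)%R, 0%R]) (2^-1 * expR (- `|x|))%R%:E
   = \int[lebesgue_measure]_(x in `[(- t)%R, 0%R]) (2^-1 * expR x)%R%:E)%E.
  apply: eq_integral => x; rewrite inE/= in_itv/= => /andP[_ h].
  by rewrite ler0_norm// opprK.
have -> : (\int[lebesgue_measure]_(x in `[0%R, t]) (2^-1 * expR (- `|x|))%R%:E
   = \int[lebesgue_measure]_(x in `[0%R, t]) (2^-1 * expR (- x))%R%:E)%E.
  apply: eq_integral => x; rewrite inE/= in_itv/= => /andP[h _].
  by rewrite ger0_norm.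
rewrite (@ftc_all R _ (fun y : R => 2^-1 * expR y) (- t) 0); last 2 first.
- lra.
- exact: cont_f2.
rewrite (@ftc_all R _ (fun y : R => - 2^-1 * expR (- y)) 0 t t0 (@cont_f1 R) (@dF1 R)).
rewrite -!EFinD; congr EFin; rewrite oppr0 expR0; lra.
Qed.

Lemma lap_tail d (T : measurableType d) (R : realType) (P : probability T R)
  (X : T -> R) (t : R) : laplace_rv P X -> 0 < t ->
  P [set w | (t < `|X w|)%R] = (expR (- t))%:E.
Proof.
move=> [mX hX] t0.
have mS : measurable (X @^-1` [set` `[- t, t]]).
  by have := mX measurableT _ (measurable_itv `[- t, t]); rewrite setTI.
have -> : [set w | (t < `|X w|)%R] = ~` (X @^-1` [set` `[- t, t]]).
  apply/seteqP; split => w /=; rewrite in_itv/=.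
    by move=> h /andP[h1 h2]; move: h; rewrite ltNge ler_norml h1 h2.
  by move=> h; rewrite ltNge ler_norml; apply/negP => /andP[h1 h2]; apply: h; rewrite h1 h2.
rewrite probability_setC// hX// lap_int// -EFinB; congr EFin; lra.
Qed.
Lemma meas_gt d (T : measurableType d) (R : realType) (f : T -> R) (c : R) :
  measurable_fun setT f -> measurable [set w | (c < f w)%R].
Proof.
move=> mf; have := mf measurableT _ (measurable_itv `]c, +oo[).
rewrite setTI; congr measurable.
by apply/seteqP; split => w /=; rewrite in_itv/= andbT.
Qed.

Lemma bigU_le d (T : measurableType d) (R : realType) (P : probability T R)
  (I : Type) (s : seq I) (F : I -> set T) : (forall i, measurable (F i)) ->
  (P (\big[setU/set0]_(i <- s) F i) <= \sum_(i <- s) P (F i))%E.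
Proof.
move=> mF; elim: s => [|i s IH]; first by rewrite !big_nil measure0.
rewrite !big_cons; apply: le_trans (measureU2 _ _ _) _ => //.
  by apply: bigsetU_measurable.
exact: leeD.
Qed.

Lemma indic_gt (T : Type) (R : realType) (f : T -> R) (a : R) w :
  \1_[set w | (a < f w)%R] w = ((a < f w)%R)%:R :> R.
Proof.
rewrite indicE; case: (boolP (a < f w)) => h.
  by rewrite mem_set.
by rewrite memNset //= => h'; move: h; rewrite h'.
Qed.

Lemma ptwise (R : realType) (y : R) (B : nat) : 0 <= y -> y <= 2 * B%:R ->
  y <= 2 * \sum_(m < B) ((2 * m%:R < y)%R)%:R.
Proof.
move=> y0; elim: B => [|B IH] hy.
  by rewrite big_ord0 mulr0; move: hy; rewrite mulr0.
rewrite big_ord_recr /=.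
have [h|h] := leP y (2 * B%:R).
  have := IH h; have : 0 <= (((2 * B%:R < y)%R)%:R : R) by case: (_ < _).
  by move=> _ h2; rewrite mulrDr (_ : (false%:R : R) = 0)// mulr0 addr0.
have H : forall m : 'I_B, (2 * (m : nat)%:R < y) = true.
  move=> m; apply: (le_lt_trans _ h); rewrite ler_pM2l ?ler_nat//; exact: ltnW.
under eq_bigr do rewrite H.
rewrite (_ : (true%:R : R) = 1)// sumr_const card_ord; move: hy; rewrite -natr1 => hy; lra.
Qed.

Lemma geo (R : realType) (B : nat) : \sum_(m < B) ((2^-1 : R) ^+ m) <= 2.
Proof.
have E : \sum_(m < B) ((2^-1 : R) ^+ m) = 2 - 2 * (2^-1) ^+ B.
  elim: B => [|B IH]; first by rewrite big_ord0 expr0; lra.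
  by rewrite big_ord_recr /= IH exprS; lra.
rewrite E; have : 0 <= (2^-1 : R) ^+ B by apply: exprn_ge0; lra.
lra.
Qed.

Lemma exp_bound (R : realType) (m : nat) : expR (- (2 * m%:R)) <= (4^-1 : R) ^+ m.
Proof.
have e1 : 2 <= expR (1 : R) by have := expR_ge1Dx (1 : R); lra.
have e4 : 4 <= expR (2 : R).
  have -> : (2 : R) = 1 + 1 by lra.
  rewrite expRD; have := expR_ge0 (1:R); nra.
have e2 : expR (- 2) <= (4^-1 : R).
  rewrite expRN -div1r ler_pdivrMr ?expR_gt0//; lra.
have -> : - (2 * m%:R) = m%:R * (- 2 : R) by lra.
rewrite expRM_natl; apply: lerXn2r => //; rewrite ?nnegrE ?expR_ge0//; lra.
Qed.

Lemma rpow (R : realType) (r K : nat) :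
  r%:R * (4^-1 : R) ^+ (r + K) <= (4^-1) ^+ K.
Proof.
rewrite exprD mulrA; apply: ler_piMl; first by apply: exprn_ge0; lra.
rewrite exprVn -div1r mulrA mulr1 ler_pdivrMr ?exprn_gt0// mul1r.
rewrite (_ : (4 : R) = 4%:R)// -natrX ler_nat; apply: ltnW; exact: ltn_expl.
Qed.

Lemma ediv (R : realType) (x : \bar R) (a b : R) : 0 < a -> (0 <= x)%E ->
  (a%:E * x <= b%:E)%E -> (x <= (b / a)%:E)%E.
Proof.
move=> a0; case: x => [x| |] //=.
- move=> _; rewrite -EFinM !lee_fin => h; rewrite ler_pdivlMr// mulrC//.
- by move=> _; rewrite gt0_muley ?lte_fin.
Qed.

Lemma bigU_nin (I : eqType) (T : Type) (s : seq I) (S : I -> set T) w :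
  ~ (\big[setU/set0]_(i <- s) S i) w -> forall i, i \in s -> ~ S i w.
Proof.
elim: s => [|a s IH] /=; first by [].
rewrite big_cons => h i; rewrite in_cons => /orP[/eqP ->|hi] hS.
- by apply: h; left.
- by apply: (IH (fun w' => h (or_intror w')) i hi).
Qed.

Lemma sum_const_seq (R : realType) (I : Type) (s : seq I) (c : R) :
  \sum_(j <- s) c = (size s)%:R * c.
Proof.
elim: s => [|a s IH]; first by rewrite big_nil mul0r.
by rewrite big_cons IH /= -natr1; lra.
Qed.

Lemma main_prob d (T : measurableType d) (R : realType) (P : probability T R)
  (I : eqType) (s : seq I) (Y : I -> T -> R) (r K : nat) (A : R) :
  (forall j, measurable_fun setT (Y j)) ->
  (forall j t, 0 < t -> P [set w | (t < `|Y j w|)%R] = (expR (- t))%:E) ->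
  (size s <= r)%N -> (0 < r)%N -> 0 < A ->
  (P [set w | (4 * A * r%:R < \sum_(j <- s) `|Y j w|)%R]
     <= ((4^-1) ^+ K + 2 / A)%:E)%E.
Proof.
move=> mY tail hs r0 A0.
set B := (r + K)%N.
have mN : forall j c, measurable [set w | (c < `|Y j w|)%R].
  by move=> j c; apply: meas_gt; apply: measurableT_comp => //; exact: normr_measurable.
have tailm : forall j (m : nat),
    (P [set w | (2 * m%:R < `|Y j w|)%R] <= ((4^-1 : R) ^+ m)%:E)%E.
  move=> j [|m].
    by rewrite expr0; apply: probability_le1.
  rewrite tail ?lee_fin ?exp_bound//; apply: mulr_gt0 => //; rewrite ltr0n//.
set F := \big[setU/set0]_(j <- s) [set w | (2 * B%:R < `|Y j w|)%R].
set G := fun m : nat => [set w | (A * r%:R * (2^-1) ^+ m <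
   \sum_(j <- s) \1_[set w | (2 * m%:R < `|Y j w|)%R] w)%R].
have mF : measurable F by apply: bigsetU_measurable => j _; exact: mN.
have mG : forall m, measurable (G m).
  move=> m; apply: meas_gt; apply: measurable_sum => j.
  exact: measurable_indic.
set U := \big[setU/set0]_(m < B) G m.
have mU : measurable U by apply: bigsetU_measurable => m _; exact: mG.
have mE : measurable [set w | (4 * A * r%:R < \sum_(j <- s) `|Y j w|)%R].
  apply: meas_gt; apply: measurable_sum => j.
  by apply: measurableT_comp => //; exact: normr_measurable.
have sub : [set w | (4 * A * r%:R < \sum_(j <- s) `|Y j w|)%R] `<=` F `|` U.
  move=> w /= hE; apply: contrapT => /not_orP[nF nU].
  have hF := @bigU_nin I T s _ w nF.
  have hU : forall m : 'I_B, ~ G m w.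
    by move=> m; apply: (@bigU_nin _ T _ _ w nU); rewrite mem_index_enum.
  move: hE; apply/negP; rewrite -leNgt.
  apply: (@le_trans _ _ (\sum_(j <- s) (2 * \sum_(m < B)
       ((2 * (m : nat)%:R < `|Y j w|)%R)%:R))).
    rewrite big_seq_cond [X in _ <= X]big_seq_cond.
    apply: ler_sum => j /andP[js _]; apply: ptwise => //.
    by rewrite leNgt; apply/negP => h; apply: (hF j js).
  rewrite -mulr_sumr exchange_big /=.
  apply: (@le_trans _ _ (2 * \sum_(m < B) (A * r%:R * (2^-1) ^+ m))).
    rewrite ler_pM2l//; apply: ler_sum => m _.
    rewrite leNgt; apply/negP => h; apply: (hU m) => /=.
    by rewrite /G /=; under eq_bigr do rewrite indic_gt.
  rewrite -mulr_sumr; have := geo R B.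
  have : 0 < A * r%:R by apply: mulr_gt0 => //; rewrite ltr0n.
  by nra.
apply: (le_trans (le_measure _ _ _ sub)); rewrite ?inE //; first exact: measurableU.
apply: (le_trans (measureU2 _ mF mU)).
rewrite EFinD; apply: leeD.
- apply: (le_trans (@bigU_le d T R P I s (fun j => [set w | (2 * B%:R < `|Y j w|)%R]) (fun j => mN j _))).
  apply: (@le_trans _ _ (\sum_(j <- s) ((4^-1:R)^+B)%:E)%E).
    by apply: lee_sum => j _; exact: tailm.
  rewrite sumEFin lee_fin sum_const_seq.
  apply: le_trans (rpow R r K); rewrite ler_pM2r ?exprn_gt0// ?ler_nat//.
- apply: (le_trans (@bigU_le d T R P _ (index_enum 'I_B) (fun m : 'I_B => G m) (fun m : 'I_B => mG m))).
  apply: (@le_trans _ _ (\sum_(m < B) (((2^-1:R)^+m) / A)%:E)%E).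
    apply: lee_sum => m _.
    have c0 : 0 < A * r%:R * (2^-1 : R) ^+ m.
      by rewrite !mulr_gt0 ?ltr0n ?exprn_gt0 ?invr_gt0.
    have -> : ((2^-1 : R) ^+ m / A) = r%:R * (4^-1)^+m / (A * r%:R * (2^-1) ^+ m).
      rewrite (_ : (4^-1 : R) = 2^-1 * 2^-1); last by field.
      rewrite exprMn; field.
      rewrite expf_neq0 ?pnatr_eq0 -?lt0n ?gt_eqF//=; by rewrite r0.
    apply: ediv => //.
    apply: (le_trans (@count_markov d T R P I s
       (fun j => [set w | (2 * m%:R < `|Y j w|)%R]) _ (fun j => mN j _) c0)).
    apply: (@le_trans _ _ (\sum_(j <- s) ((4^-1:R)^+m)%:E)%E).
      by apply: lee_sum => j _; exact: tailm.
    rewrite sumEFin lee_fin sum_const_seq ler_pM2r ?exprn_gt0// ?ler_nat//.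
  rewrite sumEFin lee_fin -mulr_suml ler_pM2r ?invr_gt0//; exact: geo.
Qed.

Lemma bigU_mem (I : eqType) (T : Type) (s : seq I) (p : pred I) (S : I -> set T) w :
  (\big[setU/set0]_(i <- s | p i) S i) w <-> exists i, [/\ i \in s, p i & S i w].
Proof.
elim: s => [|a s IH]; first by rewrite big_nil; split => // -[i []].
rewrite big_cons; case: (boolP (p a)) => pa.
- split.
  + case=> [h|/IH [i [i1 i2 i3]]]; first by exists a; rewrite mem_head.
    by exists i; rewrite in_cons i1 orbT.
  + move=> [i []]; rewrite in_cons => /orP[/eqP ->|iin] pi Si; first by left.
    by right; apply/IH; exists i.
- split.
  + by move=> /IH [i [i1 i2 i3]]; exists i; rewrite in_cons i1 orbT.
  + move=> [i []]; rewrite in_cons => /orP[/eqP ->|iin] pi Si.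
      by move: pa; rewrite pi.
    by apply/IH; exists i.
Qed.

Lemma hist_ffun (R : realType) (n k : nat) (th : 'I_k -> R) : is_hist n th ->
  exists a : {ffun 'I_k -> 'I_n.+1}, th = fun j => ((a j : nat)%:R / n%:R).
Proof.
move=> [a0 [hs ha]].
have le : forall j, (a0 j < n.+1)%N.
  move=> j; rewrite ltnS -hs (bigD1 j)//=; exact: leq_addr.
exists [ffun j => Ordinal (le j)]; apply/funext => j; by rewrite ffunE ha.
Qed.

Lemma size_s (k r : nat) : (r <= k)%N ->
  size (seq.filter (fun j : 'I_k => (j < r)%N) (index_enum 'I_k)) = r.
Proof.
move=> rk.
rewrite -(size_map val).
have -> : [seq val i | i <- seq.filter (fun j : 'I_k => (j < r)%N) (index_enum 'I_k)]
   = seq.filter (fun x : nat => (x < r)%N) (map val (index_enum 'I_k)).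
  by rewrite filter_map.
have -> : index_enum 'I_k = enum 'I_k by rewrite enumT.
rewrite val_enum_ord.
have := filter_iota_ltn 0 rk; rewrite add0n => ->; exact: size_iota.
Qed.

Lemma norm1_tri (R : realType) (k : nat) (th de z : 'I_k -> R) :
  norm1 (fun j => z j - de j) <= norm1 (fun j => z j - th j) ->
  norm1 (fun j => th j - de j) <= 2 * norm1 (fun j => th j - z j).
Proof.
rewrite /norm1 => h.
have e : \sum_(j < k) `|z j - th j| = \sum_(j < k) `|th j - z j|.
  by apply: eq_bigr => j _; rewrite distrC.
apply: (@le_trans _ _ (\sum_(j < k) (`|th j - z j| + `|z j - de j|))).
  apply: ler_sum => j _.
  by rewrite (_ : th j - de j = (th j - z j) + (z j - de j)) ?ler_normD //; ring.
rewrite big_split /=; lra.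
Qed.

Lemma z_bound (R : realType) (k r : nat) (th : 'I_k -> R) (Lw : 'I_k -> R) (c : R) :
  0 <= c -> (forall j : 'I_k, (r <= j)%N -> th j = 0) ->
  norm1 (fun j => th j - (if th j == 0 then th j else th j + c * Lw j))
  <= c * \sum_(j <- seq.filter (fun j : 'I_k => (j < r)%N) (index_enum 'I_k)) `|Lw j|.
Proof.
move=> c0 hth; rewrite big_filter /norm1 (bigID (fun j : 'I_k => (j < r)%N)) /=.
rewrite [X in _ + X]big1 ?addr0; last first.
  move=> j; rewrite -leqNgt => /hth ->; rewrite eqxx; by rewrite subrr normr0.
rewrite mulr_sumr; apply: ler_sum => j _.
case: (th j == 0); first by rewrite subrr normr0 mulr_ge0.
by rewrite opprD addrA subrr add0r normrN normrM ger0_norm.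
Qed.

Theorem theorem5p1 (R : realType) (eps : R) (heps : 0 < eps) :
  exists M : R,
  forall (d : measure_display) (T : measurableType d) (P : probability T R)
         (alpha gamma : R) (n k r : nat) (theta : 'I_k -> R)
         (L : 'I_k -> T -> R) (delta : ('I_k -> R) -> ('I_k -> R)),
    0 < alpha -> 0 < gamma -> gamma < 1 ->
    (2 * k)%:R <= gamma * n%:R ->
    (1 <= r)%N -> (r < k)%N ->
    is_hist n theta ->
    (forall j : 'I_k, (r <= j)%N -> theta j = 0) ->
    (forall j, laplace_rv P (L j)) ->
    mutually_independent P L ->
    (* delta(z) is a minimiser of the l1 distance to z over Theta *)
    (forall z, is_hist n (delta z) /\
       forall theta', is_hist n theta' ->
         norm1 (fun j => z j - delta z j) <= norm1 (fun j => z j - theta' j)) ->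
    let z := fun (w : T) (j : 'I_k) =>
      if theta j == 0 then theta j
      else theta j + 2 / (n%:R * alpha) * L j w in
    (* the composite delta o z is measurable (Theta is finite) *)
    (forall theta', measurable [set w | delta (z w) = theta']) ->
    (P [set w | (norm1 (fun j => theta j - delta (z w) j)
                  > M * (r%:R / (alpha * n%:R)))%R] <= eps%:E)%E.
Proof.
pose A := 4 / eps.
have A0 : 0 < A by rewrite /A divr_gt0.
pose K := Num.Def.archi_bound (2 / eps).
have hK : (4^-1 : R) ^+ K <= eps / 2.
  have h1 : 2 / eps < K%:R by apply: archi_boundP; rewrite divr_ge0// ltW.
  have h2 : (K%:R : R) <= 4 ^+ K.
    rewrite (_ : (4 : R) = 4%:R)// -natrX ler_nat; apply: ltnW; exact: ltn_expl.
  have h3 : eps * (2 / eps) = 2 by field; rewrite gt_eqF.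
  rewrite exprVn -div1r ler_pdivrMr ?exprn_gt0//; nra.
exists (16 * A).
move=> d T P al ga n k r th L de hal hga hga1 hkn hr1 hrk hth hth0 hL hind hde z hmeas.
have n0 : (0 < n)%N.
  case: n hkn {hth hde z hmeas} => [|n] //; rewrite mulr0 lern0 muln_eq0 /= => /eqP k0.
  by move: hrk; rewrite k0.
set s := seq.filter (fun j : 'I_k => (j < r)%N) (index_enum 'I_k).
set E := [set w | (4 * A * r%:R < \sum_(j <- s) `|L j w|)%R].
have hE : (P E <= ((4^-1) ^+ K + 2 / A)%:E)%E.
  apply: main_prob => //.
  - by move=> j; exact: (hL j).1.
  - by move=> j t t0; exact: lap_tail.
  - by rewrite /s size_s// ltnW.
pose hist := fun a : {ffun 'I_k -> 'I_n.+1} => (fun j => ((a j : nat)%:R / n%:R) : R).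
pose thr := 16 * A * (r%:R / (al * n%:R)).
have eq0 : [set w | (thr < norm1 (fun j => th j - de (z w) j))%R] =
  \big[setU/set0]_(a | (thr < norm1 (fun j => th j - hist a j))%R)
     [set w | de (z w) = hist a].
  apply/seteqP; split => w.
  - move=> /= h; apply/bigU_mem.
    have [a ha] := @hist_ffun R n k _ (hde (z w)).1.
    exists a; split; first exact: mem_index_enum.
    + by have -> : hist a = de (z w) by rewrite ha.
    + by rewrite /= ha.
  - by move=> /bigU_mem [a [_ pa Sa]] /=; rewrite Sa.
have mE0 : measurable (\big[setU/set0]_(a | (thr < norm1 (fun j => th j - hist a j))%R)
     [set w | de (z w) = hist a]).
  by apply: bigsetU_measurable => a _; exact: hmeas.
have mE : measurable E.
  apply: meas_gt; apply: measurable_sum => j.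
  by apply: measurableT_comp => //; exact: (hL j).1.
have sub : \big[setU/set0]_(a | (thr < norm1 (fun j => th j - hist a j))%R)
     [set w | de (z w) = hist a] `<=` E.
  move=> w /bigU_mem [a [_ pa Sa]] /=.
  move: Sa pa; rewrite /= => <- pa.
  have q0 : 0 < al * n%:R by rewrite mulr_gt0// ltr0n.
  have c0 : 0 <= 2 / (n%:R * al) by rewrite divr_ge0// mulrC ltW.
  have h1 := @norm1_tri R k th (de (z w)) (z w) ((hde (z w)).2 th hth).
  have h2 := @z_bound R k r th (fun j => L j w) _ c0 hth0.
  have key : thr < 2 * (2 / (n%:R * al) * \sum_(j <- s) `|L j w|).
    apply: (lt_le_trans pa); apply: (le_trans h1).
    by rewrite ler_pM2l//; exact: h2.
  move: key; rewrite /thr mulrC [n%:R * al]mulrC.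
  set q := al * n%:R; set S := \sum_(j <- s) `|L j w|.
  have e1 : r%:R / q * (16 * A) = (16 * A * r%:R) * q^-1 by rewrite mulrC mulrA.
  have e2 : 2 * (2 / q * S) = (4 * S) * q^-1 by field; rewrite gt_eqF.
  rewrite e1 e2 ltr_pM2r ?invr_gt0//; move=> hh; rewrite /E /= -/S -mulrA; rewrite -mulrA in hh; lra.
rewrite -/thr eq0; apply: le_trans (le_measure _ _ _ sub) _; rewrite ?inE//.
apply: le_trans hE _; rewrite lee_fin.
have : 2 / A = eps / 2 by rewrite /A; field; rewrite gt_eqF.
lra.
Qed.
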